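(* Let $p$ be an odd prime and let $R$ be a local nearring whose additive group is $G_1=\langle a\rangle+\langle b\rangle+\langle c\rangle$ with $ap=bp=cp=0$, $a+b=b+a+c$, $c$ central, where $a$ is the identity element of $R$, $c=-a-b+a+b$, and the subgroup $L$ of non-invertible elements equals $\langle b\rangle+\langle c\rangle$. Write elements as $x=ax_1+bx_2+cx_3$ ($0\le x_i<p$) and define $\alpha,\beta,\gamma\colon R\to\mathbb Z_p$ by $xb=a\alpha(x)+b\beta(x)+c\gamma(x)$. Then for $x,y\in R$, $$x\cdot y=ax_1y_1+b(x_2y_1+\beta(x)y_2)+c\Big(-x_1x_2\tbinom{y_1}{2}+x_3y_1+\gamma(x)y_2+x_1\beta(x)y_3\Big),$$ and moreover: (0) $\alpha(0)\equiv\beta(0)\equiv\gamma(0)\equiv0\pmod p$ if and only if $R$ is zero-symmetric; (1) $\alpha(x)\equiv 0\pmod p$ for all $x$; (2) if $\beta(x)\equiv0\pmod p$ then $x_1\equiv0\pmod p$; (3) $\beta(xy)\equiv\beta(x)\beta(y)\pmod p$; (4) $\gamma(xy)\equiv\gamma(x)\beta(y)+x_1\beta(x)\gamma(y)\pmod p$.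
   Context: A (left) nearring is a set $R$ with operations $+,\cdot$ such that $(R,+)$ is a group with neutral element $0$, $(R,\cdot)$ is a semigroup, and $x(y+z)=xy+xz$ for all $x,y,z$. A nearring with identity (i.e. $(R,\cdot)$ a monoid) is local if the set $L$ of its non-invertible elements is a subgroup of $(R,+)$. $R$ is zero-symmetric if $0\cdot x=0$ for all $x$. Additive notation: $gk$ is $g$ added $k$ times. *)

(* Defs.v *)
From mathcomp Require Import all_boot all_algebra.
Set Implicit Arguments. Unset Strict Implicit. Unset Printing Implicit Defensive.
Import GRing.Theory.
Local Open Scope ring_scope.

(* The group G_1 (Heisenberg group of order p^3), in normal-form coordinates:
   the triple (x1,x2,x3) stands for a x1 + b x2 + c x3. *)
Definition G1 (p : nat) := ('Z_p * 'Z_p * 'Z_p)%type.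

Section G1ops.
Variable p : nat.
Implicit Types x y : G1 p.

Definition g1 x : 'Z_p := x.1.1.
Definition g2 x : 'Z_p := x.1.2.
Definition g3 x : 'Z_p := x.2.

(* (a x1 + b x2 + c x3) + (a y1 + b y2 + c y3)
     = a (x1+y1) + b (x2+y2) + c (x3 + y3 - x2 y1)  since b + a = a + b - c *)
Definition addG x y : G1 p :=
  (g1 x + g1 y, g2 x + g2 y, g3 x + g3 y - g2 x * g1 y).
Definition zeroG : G1 p := (0, 0, 0).
Definition negG x : G1 p := (- g1 x, - g2 x, - g3 x - g2 x * g1 x).

Definition aG : G1 p := (1, 0, 0).
Definition bG : G1 p := (0, 1, 0).
Definition cG : G1 p := addG (addG (addG (negG aG) (negG bG)) aG) bG.

Definition gmul (g : G1 p) (k : nat) : G1 p := iter k (fun h => addG h g) zeroG.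

Definition elem (k1 k2 k3 : 'Z_p) : G1 p :=
  addG (addG (gmul aG k1) (gmul bG k2)) (gmul cG k3).

Definition is_nearring_with_id (mul : G1 p -> G1 p -> G1 p) : Prop :=
  (forall x y z, mul x (mul y z) = mul (mul x y) z) /\
  (forall x y z, mul x (addG y z) = addG (mul x y) (mul x z)) /\
  (forall x, mul aG x = x /\ mul x aG = x).

Definition invertible (mul : G1 p -> G1 p -> G1 p) x : Prop :=
  exists y, mul x y = aG /\ mul y x = aG.

Definition zero_symmetric (mul : G1 p -> G1 p -> G1 p) : Prop :=
  forall x, mul zeroG x = zeroG.

Definition alpha (mul : G1 p -> G1 p -> G1 p) x : 'Z_p := g1 (mul x bG).
Definition beta  (mul : G1 p -> G1 p -> G1 p) x : 'Z_p := g2 (mul x bG).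
Definition gamma (mul : G1 p -> G1 p -> G1 p) x : 'Z_p := g3 (mul x bG).
End G1ops.

(* Main.v *)
Require Import Defs.
From mathcomp Require Import all_boot all_algebra.
From mathcomp Require Import ring.
Import GRing.Theory.
Local Open Scope ring_scope.
From mathcomp Require Import ring.
Section S.
Variable p : nat.
Implicit Types x y g : G1 p.

Lemma G1eq x y : g1 x = g1 y -> g2 x = g2 y -> g3 x = g3 y -> x = y.
Proof. by case: x => [[? ?] ?]; case: y => [[? ?] ?]; rewrite /g1 /g2 /g3 /= => -> -> ->. Qed.

Lemma tripleP (a b c d e f : 'Z_p) : (a,b,c) = (d,e,f) -> [/\ a = d, b = e & c = f].
Proof.
move=> E; split; [exact: (congr1 (fun t => t.1.1) E) | exact: (congr1 (fun t => t.1.2) E) | exact: (congr1 (fun t => t.2) E)].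
Qed.

Lemma natZ (i : 'Z_p) : ((val i)%:R : 'Z_p) = i.
Proof. exact: natr_Zp. Qed.

Lemma gmulE g (k : nat) : gmul g k =
  (k%:R * g1 g, k%:R * g2 g, k%:R * g3 g - ('C(k,2))%:R * (g1 g * g2 g)).
Proof.
elim: k => [|k IH].
  by rewrite /gmul /= /zeroG !mul0r subr0.
rewrite /gmul iterS -/(gmul g k) IH /addG /g1 /g2 /g3 /=.
rewrite binS bin1 !natrD !mulrSr.
congr (_, _, _); ring.
Qed.

Lemma elemE (k1 k2 k3 : 'Z_p) : elem k1 k2 k3 = (k1, k2, k3).
Proof.
rewrite /elem !gmulE /cG /addG /negG /aG /bG /g1 /g2 /g3 /= !natZ.
congr (_, _, _); ring.
Qed.

Lemma decomp y : y = addG (addG (gmul (aG p) (val (g1 y))) (gmul (bG p) (val (g2 y))))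
   (gmul (cG p) (val (g3 y))).
Proof. transitivity (elem (g1 y) (g2 y) (g3 y)); last by []. by rewrite elemE; case: y => [[? ?] ?]. Qed.

Lemma cbaE : addG (addG (bG p) (aG p)) (cG p) = addG (aG p) (bG p).
Proof. rewrite /cG /addG /negG /aG /bG /g1 /g2 /g3 /=. congr (_, _, _); ring. Qed.


Variable mul : G1 p -> G1 p -> G1 p.
Hypothesis hnr : is_nearring_with_id mul.

Lemma ldist x y z : mul x (addG y z) = addG (mul x y) (mul x z).
Proof. by case: hnr => _ [h _]; apply: h. Qed.

Lemma mulassoc x y z : mul x (mul y z) = mul (mul x y) z.
Proof. by case: hnr => h _; apply: h. Qed.

Lemma mula x : mul x (aG p) = x.
Proof. by case: hnr => _ [_ h]; case: (h x). Qed.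

Lemma amul x : mul (aG p) x = x.
Proof. by case: hnr => _ [_ h]; case: (h x). Qed.

Lemma mul0 x : mul x (zeroG p) = zeroG p.
Proof.
have E := ldist x (zeroG p) (zeroG p).
have Z : addG (zeroG p) (zeroG p) = zeroG p.
  by rewrite /addG /zeroG /g1 /g2 /g3 /= !addr0 mulr0 subr0.
rewrite Z in E.
move: E; case: (mul x (zeroG p)) => [[u1 u2] u3].
rewrite /addG /g1 /g2 /g3; cbn [fst snd] => /tripleP [e1 e2 e3].
have h1 : u1 = 0 by apply: (@addrI _ u1); rewrite addr0 -e1.
have h2 : u2 = 0 by apply: (@addrI _ u2); rewrite addr0 -e2.
rewrite h1 h2 mulr0 subr0 in e3.
have h3 : u3 = 0 by apply: (@addrI _ u3); rewrite addr0 -e3.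
by rewrite h1 h2 h3.
Qed.

Lemma mulgmul x g (k : nat) : mul x (gmul g k) = gmul (mul x g) k.
Proof.
elim: k => [|k IH]; first exact: mul0.
by rewrite /gmul !iterS -!/(gmul _ _) ldist IH.
Qed.

Lemma mulc x : mul x (cG p) =
  (0, 0, g1 x * beta mul x - g2 x * alpha mul x).
Proof.
have E : addG (addG (mul x (bG p)) x) (mul x (cG p)) = addG x (mul x (bG p)).
  have E := congr1 (mul x) cbaE.
  by rewrite [in LHS]ldist [in LHS]ldist [in RHS]ldist !mula in E.
rewrite /beta /alpha.
move: E; case: (mul x (bG p)) => [[b1 b2] b3].
case: (mul x (cG p)) => [[w1 w2] w3].
case: x => [[x1 x2] x3].
rewrite /addG /g1 /g2 /g3; cbn [fst snd] => /tripleP [e1 e2 e3].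
have h1 : w1 = 0.
  have -> : w1 = b1 + x1 + w1 - (b1 + x1) by ring.
  by rewrite e1; ring.
have h2 : w2 = 0.
  have -> : w2 = b2 + x2 + w2 - (b2 + x2) by ring.
  by rewrite e2; ring.
rewrite h1 in e3; rewrite h1 h2; congr (_, _, _).
have -> : w3 = b3 + x3 - b2 * x1 + w3 - (b2 + x2) * 0 - (b3 + x3 - b2 * x1) by ring.
by rewrite e3; ring.
Qed.

Lemma formula x y : mul x y =
  (g1 y * g1 x + g2 y * alpha mul x,
   g1 y * g2 x + g2 y * beta mul x,
   g1 y * g3 x - ('C(val (g1 y), 2))%:R * (g1 x * g2 x)
   + (g2 y * gamma mul x - ('C(val (g2 y), 2))%:R * (alpha mul x * beta mul x))
   - g1 y * g2 x * (g2 y * alpha mul x)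
   + g3 y * (g1 x * beta mul x - g2 x * alpha mul x)).
Proof.
rewrite {1}(decomp y) !ldist !mulgmul mula mulc !gmulE !natZ.
rewrite /addG /alpha /beta /gamma.
case: (mul x (bG p)) => [[b1 b2] b3].
rewrite /g1 /g2 /g3 /=.
congr (_, _, _); ring.
Qed.

End S.

Theorem lemma6 (p : nat) (hp : prime p) (hodd : odd p)
  (mul : G1 p -> G1 p -> G1 p)
  (hnr : is_nearring_with_id mul)
  (hL : forall x : G1 p, ~ invertible mul x <->
          exists k2 k3 : 'Z_p, x = elem 0 k2 k3) :
  (forall x y : G1 p,
     mul x y =
     elem (g1 x * g1 y)
          (g2 x * g1 y + beta mul x * g2 y)
          (- (g1 x * g2 x * ('C(val (g1 y), 2))%:R) + g3 x * g1 y
           + gamma mul x * g2 y + g1 x * beta mul x * g3 y)) /\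
  ((alpha mul (zeroG p) = 0 /\ beta mul (zeroG p) = 0 /\ gamma mul (zeroG p) = 0)
     <-> zero_symmetric mul) /\
  (forall x, alpha mul x = 0) /\
  (forall x, beta mul x = 0 -> g1 x = 0) /\
  (forall x y, beta mul (mul x y) = beta mul x * beta mul y) /\
  (forall x y, gamma mul (mul x y) =
                 gamma mul x * beta mul y + g1 x * beta mul x * gamma mul y).
Proof.
have mA := @mulassoc p mul hnr. have am := @amul p mul hnr. have ma := @mula p mul hnr. have F := @formula p mul hnr.
have binv : ~ invertible mul (bG p).
  by apply/hL; exists 1, 0; rewrite elemE.
have nninv : forall x, g1 x != 0 -> ~ ~ invertible mul x.
  move=> x hx /hL [k2 [k3 ex]]; move: hx; rewrite ex elemE. by move/eqP; apply.

have a0 : forall x, alpha mul x = 0.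
  move=> x; apply/eqP; apply/negP => /negP ha.
  apply: (nninv _ ha) => -[u [h1 h2]].
  set v := mul u x.
  have vb : mul v (bG p) = aG p by rewrite /v -mA.
  have K : cancel (mul (bG p)) (mul v).
    by move=> y; rewrite mA vb am.
  have K' := canF_sym K.
  apply: binv; exists v; split; last exact: vb.
  by have := K' (aG p); rewrite ma.
split.
  move=> x y; rewrite elemE F a0.
  congr (_, _, _); ring.
split.
  split.
    move=> [h1 [h2 h3]] y; rewrite F h1 h2 h3 /zeroG /g1 /g2 /g3; cbn [fst snd].
    congr (_, _, _); ring.
  move=> zs; rewrite /alpha /beta /gamma zs /zeroG /g1 /g2 /g3 /=.
  by [].
split; first exact: a0.
split.
  move=> x hb; apply/eqP; apply/negP => /negP hx.
  apply: (nninv _ hx) => -[u [h1 h2]].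
  have e : mul u (mul x (bG p)) = bG p by rewrite mA h2 am.
  have := congr1 (@g2 p) e; rewrite F.
  cbn [g2 fst snd].
  change (alpha mul x * g2 u + beta mul x * beta mul u = g2 (bG p) -> False).
  rewrite a0 hb !mul0r add0r /g2 /bG /= => /eqP.
  by rewrite eq_sym oner_eq0.
split.
  move=> x y.
  have := congr1 (@g2 p) (F x (mul y (bG p))).
  cbn [g2 fst snd].
  change (g2 (mul x (mul y (bG p))) = alpha mul y * g2 x + beta mul y * beta mul x -> beta mul (mul x y) = beta mul x * beta mul y).
  rewrite a0 mA /beta => ->; ring.
move=> x y.
have := congr1 (@g3 p) (F x (mul y (bG p))).
cbn [g3 fst snd].
change (g3 (mul x (mul y (bG p))) = alpha mul y * g3 x - ('C(val (alpha mul y), 2))%:R * (g1 x * g2 x)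
   + (beta mul y * gamma mul x - ('C(val (beta mul y), 2))%:R * (alpha mul x * beta mul x))
   - alpha mul y * g2 x * (beta mul y * alpha mul x)
   + gamma mul y * (g1 x * beta mul x - g2 x * alpha mul x) -> gamma mul (mul x y) =
                 gamma mul x * beta mul y + g1 x * beta mul x * gamma mul y).
rewrite !a0 mA /gamma /beta => ->.
have -> : 'C(val (0 : 'Z_p), 2) = 0%N by [].
move: (g3 x) (g1 x) (g2 x) (g2 (mul y (bG p))) (g3 (mul y (bG p))) (g2 (mul x (bG p))) (g3 (mul x (bG p))) ('C(val (g2 (mul y (bG p))), 2)%:R : 'Z_p) => ? ? ? ? ? ? ? ?. ring.
Qed.
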